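(* Let $u\in(0,1)$ and $w\in(0,1]$. For $R>1$ let $$\varphi_R(p)=2(1-uR)w\,p^2+\big(uw(R+1)-2u-2w\big)p+u .$$ Since $\varphi_R(0)=u>0$ and $\varphi_R(1)=-u(1-w+Rw)<0$, this polynomial has a unique root in $[0,1]$; call it $p(R)$. Then $R\mapsto p(R)$ is strictly increasing on $(1,\infty)$, and $p(R)\uparrow 1/2$ as $R\to\infty$.
   Context: $p(R)$ is the fraction of cooperators at any non-zero metastable equilibrium of a population playing a public goods game. In that game $u$ is the mutation rate, $w$ is the cost of cooperation, and $R$ is the multiplication factor. *)

(* Defs.v *)
From HB Require Import structures.
From mathcomp Require Import all_boot all_order all_algebra.
From mathcomp Require Import all_classical all_reals all_analysis.
Set Implicit Arguments. Unset Strict Implicit. Unset Printing Implicit Defensive.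
Import Order.TTheory GRing.Theory Num.Theory.
Local Open Scope ring_scope.

Definition phi {R : realType} (u w r p : R) : R :=
  2 * (1 - u * r) * w * p ^+ 2 + (u * w * (r + 1) - 2 * u - 2 * w) * p + u.

(* Main.v *)
Require Import Defs.
From HB Require Import structures.
From mathcomp Require Import all_boot all_order all_algebra.
From mathcomp Require Import all_classical all_reals all_analysis.
From mathcomp Require Import ring lra.
Import Order.TTheory GRing.Theory Num.Theory.
Import numFieldNormedType.Exports.
Local Open Scope classical_set_scope.
Local Open Scope ring_scope.

Section S.
Variable R : realType.

Lemma core (a b c x p : R) : a * x ^+ 2 + b * x + c = 0 -> 0 < c -> a + b + c < 0 ->
  0 <= x <= 1 -> 0 <= p <= 1 ->
  [/\ 0 < x, x < 1, a * p ^+ 2 + b * p + c = (p - x) * (a * (p + x) + b) &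
      a * (p + x) + b < 0].
Proof.
move=> hx hc hs /andP[x0 x1] /andP[p0 p1].
have xn0 : 0 < x.
  rewrite lt_neqAle x0 andbT; apply/eqP => ex; rewrite -ex in hx; lra.
have xn1 : x < 1.
  rewrite lt_neqAle x1 andbT; apply/eqP => ex; rewrite ex in hx; lra.
have L0 : a * x + b < 0.
  have e : c = - x * (a * x + b).
    apply/eqP; rewrite -subr_eq0; apply/eqP; rewrite -hx; ring.
  rewrite e in hc; nra.
have L1 : a * (1 + x) + b < 0.
  have e : a + b + c = (1 - x) * (a * (1 + x) + b).
    apply/eqP; rewrite -subr_eq0; apply/eqP; rewrite -hx; ring.
  rewrite e in hs; nra.
split=> //.
  apply/eqP; rewrite -subr_eq0; apply/eqP; rewrite -hx; ring.
have -> : a * (p + x) + b = (1 - p) * (a * x + b) + p * (a * (1 + x) + b) by ring.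
have h1 : 0 <= (1 - p) * - (a * x + b) by apply: mulr_ge0; lra.
have h2 : 0 <= p * - (a * (1 + x) + b) by apply: mulr_ge0; lra.
have [p0'|] := eqVneq p 0; first by rewrite p0'; lra.
move=> pn0; have pp : 0 < p by rewrite lt_neqAle eq_sym pn0 p0.
have h3 : 0 < p * - (a * (1 + x) + b) by apply: mulr_gt0; lra.
lra.
Qed.

Lemma cont_quad (a b c : R) : continuous (fun x : R => a * x ^+ 2 + b * x + c).
Proof.
move=> x; apply: cvgD; last exact: cvg_cst.
apply: cvgD; apply: cvgM; (try exact: cvg_cst); rewrite ?expr2.
  by apply: cvgM; exact: cvg_id.
exact: cvg_id.
Qed.

End S.
Arguments core {R a b c x p}.

Theorem mainTheorem2 (R : realType) (u w : R)
  (hu0 : 0 < u) (hu1 : u < 1) (hw0 : 0 < w) (hw1 : w <= 1) :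
  (forall r : R, 1 < r ->
     exists! x : R, (0 <= x <= 1) /\ phi u w r x = 0) /\
  (forall p : R -> R,
     (forall r : R, 1 < r -> (0 <= p r <= 1) /\ phi u w r (p r) = 0) ->
     (forall r1 r2 : R, 1 < r1 -> r1 < r2 -> p r1 < p r2) /\
     (p r @[r --> +oo] --> (2^-1 : R))).
Proof.
have Hs : forall r : R, 1 < r ->
    2 * (1 - u * r) * w + (u * w * (r + 1) - 2 * u - 2 * w) + u < 0.
  move=> r r1; have : 0 < u * w * (r - 1) by apply: mulr_gt0; [apply: mulr_gt0|lra].
  lra.
have Hhalf : forall r x : R, 1 < r -> 0 <= x <= 1 -> phi u w r x = 0 -> x < 2^-1.
  move=> r x r1 hx fx.
  have h12 : (0 <= (2^-1 : R) <= 1) by apply/andP; split; lra.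
  have [_ _ e L] := core fx hu0 (Hs r r1) hx h12.
  have : phi u w r 2^-1 = - (w * (1 - u)) / 2 by rewrite /phi; field.
  rewrite /phi e => e2.
  have : 0 < w * (1 - u) by apply: mulr_gt0; lra.
  move=> h; nra.
split.
  move=> r r1.
  have side : Num.min (phi u w r 0) (phi u w r 1) <= 0 <= Num.max (phi u w r 0) (phi u w r 1).
    have -> : phi u w r 0 = u by rewrite /phi; ring.
    have : phi u w r 1 < 0 by have := Hs r r1; rewrite /phi expr1n !mulr1.
    move=> h1; apply/andP; split.
      by rewrite ge_min; apply/orP; right; lra.
    by rewrite le_max; apply/orP; left; lra.
  have [x hx fx] := @IVT R (phi u w r) 0 1 0 ler01
    (continuous_subspaceT (@cont_quad R _ _ _)) side.
  have hxI : 0 <= x <= 1 by move: hx; rewrite in_itv.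
  exists x; split; first by split.
  move=> y [hy fy].
  have [_ _ e L] := core fx hu0 (Hs r r1) hxI hy.
  move: fy; rewrite /phi e => /eqP; rewrite mulf_eq0 => /orP[|/eqP]; last lra.
  by rewrite subr_eq0 => /eqP ->.
move=> p hp; split.
  move=> r1 r2 h1 h12.
  have h2 : 1 < r2 by lra.
  have [hx1 f1] := hp r1 h1; have [hx2 f2] := hp r2 h2.
  have lt1 := Hhalf r1 (p r1) h1 hx1 f1.
  have ep : phi u w r2 (p r1) = (r2 - r1) * (u * w * p r1 * (1 - 2 * p r1)).
    apply/eqP; rewrite -subr_eq0; apply/eqP; rewrite -f1 /phi; ring.
  have [pp _ _ _] := core f1 hu0 (Hs r1 h1) hx1 hx1.
  have pos : 0 < phi u w r2 (p r1).
    rewrite ep; apply: mulr_gt0; first lra.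
    apply: mulr_gt0; last lra.
    by apply: mulr_gt0 => //; apply: mulr_gt0.
  have [_ _ e L] := core f2 hu0 (Hs r2 h2) hx2 hx1.
  move: pos; rewrite /phi e => pos.
  nra.
apply/cvgrPdist_lt => e e0.
set eps := Num.min (e / 2) (4^-1 : R).
have eps0 : 0 < eps by rewrite lt_min; apply/andP; split; lra.
have epse : eps <= e / 2 by rewrite ge_min lexx.
have eps4 : eps <= 4^-1 by rewrite ge_min lexx orbT.
set k := u * w * eps.
have k0 : 0 < k by apply: mulr_gt0 => //; apply: mulr_gt0.
exists (1 + 8 / k); split; first by rewrite num_real.
move=> r Mr.
have r1 : 1 < r.
  have : 0 < 8 / k by apply: divr_gt0.
  lra.
have rk : 8 < r * k.
  have : (1 + 8 / k) * k < r * k by rewrite ltr_pM2r.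
  rewrite mulrDl mul1r mulfVK; last by rewrite gt_eqF.
  lra.
have [hx f] := hp r r1.
have lt := Hhalf r (p r) r1 hx f.
set q := 2^-1 - eps.
have hq : 0 <= q <= 1 by apply/andP; split; rewrite /q; lra.
have eqq : phi u w r q = (2 * w * q ^+ 2 + u * w * q + u - (2 * u + 2 * w) * q)
   + 2 * q * (r * k).
  by rewrite /phi /k /q; field.
have q4 : 4^-1 <= q by rewrite /q; lra.
have A : 0 <= 2 * w * q ^+ 2 + u * w * q + u.
  have : 0 <= 2 * w * q ^+ 2 by apply: mulr_ge0; [lra|apply: sqr_ge0].
  have : 0 <= u * w * q by apply: mulr_ge0; [apply: mulr_ge0|]; lra.
  lra.
have B : (2 * u + 2 * w) * q <= 4.
  have : (2 * u + 2 * w) * q <= 4 * q by apply: ler_wpM2r; lra.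
  lra.
have C : 4 < 2 * q * (r * k) by nra.
have pos : 0 < phi u w r q by rewrite eqq; lra.
have [_ _ e' L] := core f hu0 (Hs r r1) hx hq.
move: pos; rewrite /phi e' => pos.
have : q < p r by nra.
move=> hqp.
rewrite ger0_norm; last lra.
rewrite /q in hqp; lra.
Qed.
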